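(* Let $L\subseteq\Sigma^*$ with $L\notin\{\emptyset,\Sigma^*\}$, and suppose $L$ is prefix-closed, suffix-closed, factor-closed, or subword-closed. Then: - $L^{-*}=L^-\cup\{\epsilon\}$ and $L^{-*-}=L\setminus\{\epsilon\}$; - $(L\setminus\{\epsilon\})^*=L^*$; - $L^*$ is closed under the same relation as $L$. Consequently, every language obtainable from $L$ by finitely many applications of Kleene star and complement is one of the eight languages $L$, $L^-$, $L^-\cup\{\epsilon\}$, $L\setminus\{\epsilon\}$, $L^*$, $L^{*-}$, $L^{*-}\cup\{\epsilon\}$, $L^*\setminus\{\epsilon\}$.
   Context: $L^-=\Sigma^*\setminus L$ denotes complement and $L^*$ Kleene star. Notation such as $L^{-*-}$ means apply complement, then star, then complement, in that order. A language is prefix-closed (suffix-, factor-, subword-closed) if it contains every prefix (suffix, factor, subword) of each of its words, where subword means scattered subsequence. *)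

(* Defs.v *)
From mathcomp Require Import all_boot.
Set Implicit Arguments. Unset Strict Implicit. Unset Printing Implicit Defensive.

Definition lang (T : Type) := seq T -> Prop.

Definition lang_eq (T : Type) (K M : lang T) : Prop := forall w, K w <-> M w.

Definition compl (T : Type) (L : lang T) : lang T := fun w => ~ L w.

Inductive star (T : Type) (L : lang T) : lang T :=
| star_nil : star L [::]
| star_app : forall u v, L u -> star L v -> star L (u ++ v).

Definition add_eps (T : Type) (L : lang T) : lang T := fun w => L w \/ w = [::].
Definition rem_eps (T : Type) (L : lang T) : lang T := fun w => L w /\ w <> [::].

(* L is closed under the relation R: if R u v ("u is an R-part of v")
   and v \in L then u \in L. Used with R = prefix, suffix, infix (factor),
   subseq (scattered subword). *)
Definition closed_under (T : Type) (R : seq T -> seq T -> bool) (L : lang T) : Prop :=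
  forall u v, R u v -> L v -> L u.

Inductive star_compl_reach (T : Type) (L : lang T) : lang T -> Prop :=
| scr_base : star_compl_reach L L
| scr_star : forall K, star_compl_reach L K -> star_compl_reach L (star K)
| scr_compl : forall K, star_compl_reach L K -> star_compl_reach L (compl K).

(* Main.v *)
Require Import Defs.
From mathcomp Require Import all_boot.
From Stdlib Require Import Classical.
Set Implicit Arguments.

Section Aux.
Context {T : eqType}.

Lemma take_cat_gen (u v : seq T) n :
  take n (u ++ v) = take n u ++ take (n - size u) v.
Proof.
elim: u n => [|x u IH] [|n] //=; by rewrite ?subn0 ?take0 ?drop0 ?IH ?subSS.
Qed.

Lemma drop_cat_gen (u v : seq T) n :
  drop n (u ++ v) = drop n u ++ drop (n - size u) v.
Proof.
elim: u n => [|x u IH] [|n] //=; by rewrite ?subn0 ?take0 ?drop0 ?IH ?subSS.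
Qed.

Definition splitR (R : seq T -> seq T -> bool) :=
  forall s u v, R s (u ++ v) -> exists s1 s2, s = s1 ++ s2 /\ R s1 u /\ R s2 v.

Lemma split_prefix : splitR (@prefix T).
Proof.
move=> s u v /prefixP [t Ht].
have -> : s = take (size s) (u ++ v) by rewrite Ht take_size_cat //.
rewrite take_cat_gen; do 2 eexists; split; first reflexivity.
by split; apply: prefix_take.
Qed.

Lemma split_suffix : splitR (@suffix T).
Proof.
move=> s u v /suffixP [t Ht].
have -> : s = drop (size t) (u ++ v) by rewrite Ht drop_size_cat //.
rewrite drop_cat_gen; do 2 eexists; split; first reflexivity.
by split; apply: suffix_drop.
Qed.

Lemma split_infix : splitR (@infix T).
Proof.
move=> s u v /infixP [p [q Hpq]].
have -> : s = take (size s) (drop (size p) (u ++ v)).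
  by rewrite Hpq drop_size_cat // take_size_cat //.
rewrite drop_cat_gen take_cat_gen; do 2 eexists; split; first reflexivity.
split; apply: (prefix_suffix_trans (prefix_take _ _) (suffix_drop _ _)).
Qed.

Lemma split_subseq : splitR (@subseq T).
Proof.
move=> s u v /subseqP [m Hm ->].
have Hm1 : size (take (size u) m) = size u.
  by rewrite size_takel // Hm size_cat leq_addr.
rewrite -(cat_take_drop (size u) m) mask_cat //.
do 2 eexists; split; first reflexivity.
by split; apply: mask_subseq.
Qed.

Variable R : seq T -> seq T -> bool.
Hypothesis Hsplit : splitR R.
Hypothesis Hnil : forall s, R s [::] -> s = [::].
Hypothesis Hcat : forall u v, R u (u ++ v) \/ R v (u ++ v).

Lemma star_closed (K : lang T) : closed_under R K -> closed_under R (star K).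
Proof.
move=> HK s w Hs Hw; elim: Hw s Hs => [|u v Hu Hv IH] s Hs.
  by rewrite (Hnil Hs); constructor.
move: (Hsplit u v Hs) => [s1 [s2 [-> [H1 H2]]]].
by constructor; [apply: HK H1 Hu | apply: IH].
Qed.

Lemma star_compl_eq (K : lang T) : closed_under R K ->
  lang_eq (star (compl K)) (add_eps (compl K)).
Proof.
move=> HK w; split.
  elim=> [|u v Hu Hv IH]; first by right.
  case: IH => [Hv'|->]; last by left; rewrite cats0.
  left=> Huv; case: (Hcat u v) => H; [exact: Hu (HK _ _ H Huv) | exact: Hv' (HK _ _ H Huv)].
case=> [H|->]; last by constructor.
by rewrite -(cats0 w); constructor => //; constructor.
Qed.
End Aux.

Section Gen.
Context {T : eqType}.

Lemma star_mono (K M : lang T) : (forall w, K w -> M w) -> forall w, star K w -> star M w.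
Proof. move=> H w; elim=> [|u v Hu Hv IH]; constructor; auto. Qed.

Lemma star_eqc (K M : lang T) : lang_eq K M -> lang_eq (star K) (star M).
Proof. move=> H w; split; apply: star_mono => x; apply H. Qed.

Lemma compl_eqc (K M : lang T) : lang_eq K M -> lang_eq (compl K) (compl M).
Proof. move=> H w; rewrite /compl; split => Hn Hx; apply Hn; apply H, Hx. Qed.

Lemma star_app2 (K : lang T) u v : star K u -> star K v -> star K (u ++ v).
Proof. elim=> [|a b Ha Hb IH] // Hv; rewrite -catA; constructor; auto. Qed.

Lemma star_star (K : lang T) : lang_eq (star (star K)) (star K).
Proof.
move=> w; split; last by apply: star_mono => x Hx; rewrite -(cats0 x); apply: star_app; [exact: Hx | constructor].
elim=> [|u v Hu Hv IH]; [constructor | exact: star_app2].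
Qed.

Lemma star_rem (K : lang T) : lang_eq (star (rem_eps K)) (star K).
Proof.
move=> w; split; first by apply: star_mono => x [].
elim=> [|u v Hu Hv IH]; first constructor.
case: (classic (u = [::])) => [->|Hn] //; by constructor.
Qed.

Lemma star_add (K : lang T) : lang_eq (star (add_eps K)) (star K).
Proof.
move=> w; split; last by apply: star_mono => x; left.
elim=> [|u v [Hu|->] Hv IH]; by [constructor | constructor | ].
Qed.

Lemma compl_compl (K : lang T) : lang_eq (compl (compl K)) K.
Proof. move=> w; rewrite /compl; split; [apply: NNPP | tauto]. Qed.

Lemma compl_add (K : lang T) : lang_eq (compl (add_eps (compl K))) (rem_eps K).
Proof.
move=> w; rewrite /compl /add_eps /rem_eps; split.
  move=> H; split; [apply: NNPP => Hn; apply H; left=> //| move=> E; apply H; by right].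
by case=> H1 H2 [|].
Qed.

Lemma compl_rem (K : lang T) : lang_eq (compl (rem_eps K)) (add_eps (compl K)).
Proof.
move=> w; rewrite /compl /add_eps /rem_eps; split.
  move=> H; case: (classic (w = [::])) => E; [by right | left => Hw; exact: H].
by case=> [H [] | -> [] ].
Qed.

Lemma leq_trans' (A B C : lang T) : lang_eq A B -> lang_eq B C -> lang_eq A C.
Proof. move=> H1 H2 w; split => H; [apply H2, H1 | apply H1, H2] => //. Qed.
End Gen.

Theorem mainTheorem11 (T : finType) (L : lang T)
  (R : seq T -> seq T -> bool)
  (hR : R = @seq.prefix T \/ R = @seq.suffix T \/ R = @seq.infix T \/ R = @seq.subseq T)
  (hclosed : closed_under R L)
  (hne : exists w, L w) (hnfull : exists w, ~ L w) :
  [/\ lang_eq (star (compl L)) (add_eps (compl L)),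
      lang_eq (compl (star (compl L))) (rem_eps L),
      lang_eq (star (rem_eps L)) (star L),
      closed_under R (star L)
    & forall K, star_compl_reach L K ->
      lang_eq K L \/ lang_eq K (compl L) \/ lang_eq K (add_eps (compl L)) \/
      lang_eq K (rem_eps L) \/ lang_eq K (star L) \/ lang_eq K (compl (star L)) \/
      lang_eq K (add_eps (compl (star L))) \/ lang_eq K (rem_eps (star L))].
Proof.
have Hsplit : @splitR T R.
  by case: hR => [->|[->|[->|->]]]; [apply: split_prefix | apply: split_suffix
    | apply: split_infix | apply: split_subseq].
have Hsub : forall s w, R s w -> subseq s w.
  move=> s w; case: hR => [->|[->|[->|->]]] //.
  - by move/prefixW/infixW.
  - by move/suffixW/infixW.
  - by move/infixW.
have Hnil : forall s, R s [::] -> s = [::].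
  by move=> s /Hsub; rewrite subseq0 => /eqP.
have Hcat : forall u v, R u (u ++ v) \/ R v (u ++ v).
  move=> u v; case: hR => [->|[->|[->|->]]].
  - by left; apply: prefix_prefix.
  - by right; apply: suffix_suffix.
  - by left; apply: prefix_infix.
  - by left; apply: prefix_subseq.
have HS := @star_closed _ R Hsplit Hnil L hclosed.
have E1 := @star_compl_eq _ R Hcat L hclosed.
have E1S := @star_compl_eq _ R Hcat _ HS.
have E2 : lang_eq (compl (star (compl L))) (rem_eps L).
  exact: (leq_trans' (compl_eqc E1) (compl_add L)).
split => //; first exact: star_rem.
move=> K; elim=> [|K' _ IH|K' _ IH]; first by left.
-
  have := fun M (H : lang_eq K' M) => star_eqc H.
  move=> St.
  case: IH => [H|[H|[H|[H|[H|[H|[H|H]]]]]]].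
  + by do 4 right; left; apply: St H.
  + by do 2 right; left; exact: leq_trans' (St _ H) E1.
  + do 2 right; left; exact: (leq_trans' (St _ H) (leq_trans' (star_add _) E1)).
  + by do 4 right; left; exact: leq_trans' (St _ H) (star_rem _).
  + by do 4 right; left; exact: leq_trans' (St _ H) (star_star _).
  + by do 6 right; left; exact: leq_trans' (St _ H) E1S.
  + do 6 right; left; exact: (leq_trans' (St _ H) (leq_trans' (star_add _) E1S)).
  + do 4 right; left; exact: (leq_trans' (St _ H) (leq_trans' (star_rem _) (star_star _))).
- case: IH => [H|[H|[H|[H|[H|[H|[H|H]]]]]]].
  + by right; left; apply: compl_eqc H.
  + by left; exact: leq_trans' (compl_eqc H) (compl_compl _).
  + by do 3 right; left; exact: leq_trans' (compl_eqc H) (compl_add _).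
  + by do 2 right; left; exact: leq_trans' (compl_eqc H) (compl_rem _).
  + by do 5 right; left; apply: compl_eqc H.
  + by do 4 right; left; exact: leq_trans' (compl_eqc H) (compl_compl _).
  + by do 7 right; exact: leq_trans' (compl_eqc H) (compl_add _).
  + by do 6 right; left; exact: leq_trans' (compl_eqc H) (compl_rem _).
Qed.
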